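(* The exponential generating function $f(x,y)=f(x,y;p,q)=\sum_{n\ge1}a_n(y;p,q)\frac{x^n}{n!}$ satisfies $$\frac{\partial}{\partial x}f(x,y)=ypq^2+\frac{ypq}{1-yp}\bigl(f(x,1)-f(x,yp)\bigr)+\frac{ypq^2}{1-ypq}\bigl(f(x,yp)-ypq\,f(xypq,1/q)\bigr).$$
   Context: An inversion sequence of length $n$ is a sequence $\rho=\rho_1\cdots\rho_n$ of integers with $1\le \rho_i\le i$ for all $i$. Let $I_{n,i}$ be the set of inversion sequences of length $n$ with last letter $i$. Represent $\rho$ as a bargraph whose $i$-th column has $\rho_i$ unit cells. Let $\mathrm{area}(\rho)=\rho_1+\cdots+\rho_n$ and let $\mathrm{sper}(\rho)$ be half the perimeter of the bargraph (bottom boundary included), i.e. $\mathrm{sper}(\rho)=n+\rho_1+\sum_{i=1}^{n-1}\max(\rho_{i+1}-\rho_i,0)$. Define $a_{n,i}(p,q)=\sum_{\rho\in I_{n,i}}p^{\mathrm{area}(\rho)}q^{\mathrm{sper}(\rho)}$ and $a_n(y;p,q)=\sum_{i=1}^n a_{n,i}(p,q)y^i$. *)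

(* Defs.v *)
From HB Require Import structures.
From mathcomp Require Import all_boot all_order all_algebra.
Set Implicit Arguments. Unset Strict Implicit. Unset Printing Implicit Defensive.
Import Order.TTheory GRing.Theory Num.Theory.
Local Open Scope ring_scope.

(* Inversion sequences are represented as seq nat; rho_i = nth 0 s (i-1). *)
Definition is_inv_seq (n : nat) (s : seq nat) : bool :=
  (size s == n) && [forall i : 'I_n, (1 <= nth 0 s i <= i.+1)%N].

Definition area (s : seq nat) : nat := sumn s.

(* sper(rho) = n + rho_1 + sum_{i=1}^{n-1} max(rho_{i+1} - rho_i, 0)
   (truncated nat subtraction realizes max(.,0)) *)
Definition sper (s : seq nat) : nat :=
  (size s + head 0 s + \sum_(i < (size s).-1) (nth 0 s i.+1 - nth 0 s i))%N.

(* All inversion sequences of length n are among the n-tuples with entries in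
   {0,...,n}; distinct tuples give distinct sequences. *)
Definition a_ni {R : fieldType} (n i : nat) (p q : R) : R :=
  \sum_(t : n.-tuple 'I_n.+1 |
          is_inv_seq n (map val t) && (last 0%N (map val t) == i))
     p ^+ area (map val t) * q ^+ sper (map val t).

Definition a_n {R : fieldType} (n : nat) (y p q : R) : R :=
  \sum_(1 <= i < n.+1) a_ni n i p q * y ^+ i.

Definition fps (R : fieldType) := nat -> R.

Definition egf {R : fieldType} (y p q : R) : fps R :=
  fun n => if n is 0 then 0 else a_n n y p q / (n`!)%:R.

Definition fps_deriv {R : fieldType} (F : fps R) : fps R :=
  fun n => F n.+1 * (n.+1)%:R.

Definition fps_scalex {R : fieldType} (c : R) (F : fps R) : fps R :=
  fun n => c ^+ n * F n.

Definition fps_const {R : fieldType} (c : R) : fps R :=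
  fun n => if n is 0 then c else 0.

Definition fps_add {R : fieldType} (F G : fps R) : fps R := fun n => F n + G n.
Definition fps_sub {R : fieldType} (F G : fps R) : fps R := fun n => F n - G n.
Definition fps_scal {R : fieldType} (c : R) (F : fps R) : fps R := fun n => c * F n.

(* Main.v *)
Require Import Defs.
From HB Require Import structures.
From mathcomp Require Import all_boot all_order all_algebra.
From mathcomp Require Import zify ring lra.
From Stdlib Require Import FunctionalExtensionality.
Import Order.TTheory GRing.Theory Num.Theory.
Local Open Scope ring_scope.

Fixpoint invs (n : nat) : seq (seq nat) :=
  if n is m.+1 then [seq rcons s j | s <- invs m, j <- iota 1 m.+1] else [:: [::]].

Lemma is_inv_rcons n s j :
  is_inv_seq n.+1 (rcons s j) = is_inv_seq n s && (1 <= j <= n.+1)%N.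
Proof.
rewrite /is_inv_seq size_rcons eqSS.
case: (eqVneq (size s) n) => [<-|] //=.
apply/forallP/andP.
- move=> H; split.
    apply/forallP => i. have := H (widen_ord (leqnSn _) i).
    by rewrite /= nth_rcons ltn_ord.
  by have := H ord_max; rewrite /= nth_rcons ltnn eqxx.
- case=> /forallP H Hj i. rewrite nth_rcons. case: (ltnP i (size s)) => Hi /=.
    exact: (H (Ordinal Hi)).
  have Ei : (i : nat) = size s.
    by apply/eqP; rewrite eqn_leq Hi andbT -ltnS.
  by rewrite Ei eqxx.
Qed.

Lemma mem_invs n s : (s \in invs n) = is_inv_seq n s.
Proof.
elim: n s => [|n IH] s.
  rewrite /= inE /is_inv_seq; case: s => //=.
  by apply/esym/forallP => -[].
case/lastP: s => [|s x].
  have -> : is_inv_seq n.+1 [::] = false by [].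
  apply/negbTE/allpairsP => -[[s' j] [_ _]] /=.
  by case: s'.
rewrite is_inv_rcons -IH.
apply/allpairsP/andP.
- case=> [[s' j] [/= Hs Hj E]]; case/rcons_inj: E => -> ->; split => //.
  move: Hj; rewrite inE mem_iota; lia.
- case=> Hs Hj. exists (s, x). split=> //. rewrite [_.2]/= mem_iota; lia.
Qed.

Lemma uniq_invs n : uniq (invs n).
Proof.
elim: n => [|n IH] //.
change (uniq [seq rcons s j | s <- invs n, j <- iota 1 n.+1]).
apply: allpairs_uniq => //; first exact: iota_uniq.
by move=> [a b] [c d] _ _ /= /rcons_inj.
Qed.

Lemma last_invs n s : s \in invs n -> (last 0 s <= n)%N && ((0 < n)%N ==> (0 < last 0 s)%N).
Proof.
rewrite mem_invs /is_inv_seq => /andP[/eqP Hs /forallP H].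
case: n Hs H => [|n] Hs H.
  by case: s Hs H.
have := H (Ordinal (ltnSn n)). rewrite /= -nth_last Hs /=.
case/andP=> -> ->. done.
Qed.

Section S.
Variable R : fieldType.

Lemma sum_tuples n (Q : pred (seq nat)) (G : seq nat -> R) :
 \sum_(t : n.-tuple 'I_n.+1 | is_inv_seq n (map val t) && Q (map val t)) G (map val t)
 = \sum_(s <- invs n | Q s) G s.
Proof.
pose P := fun t : n.-tuple 'I_n.+1 => is_inv_seq n (map (@nat_of_ord n.+1) t).
pose g := fun t : n.-tuple 'I_n.+1 => map (@nat_of_ord n.+1) t.
have Hp : perm_eq (invs n) (map g (filter P (index_enum (n.-tuple 'I_n.+1)))).
  apply: uniq_perm; first exact: uniq_invs.
    rewrite map_inj_in_uniq ?filter_uniq ?index_enum_uniq //.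
    by move=> t1 t2 _ _ /(inj_map val_inj) /val_inj.
  move=> s. rewrite mem_invs. apply/idP/mapP.
  - move=> Hs. have sz : size (map (@inord n) s) == n.
      by rewrite size_map; case/andP: Hs.
    have E : map (@nat_of_ord n.+1) (map (@inord n) s) = s.
      rewrite -map_comp map_id_in // => k ks /=. apply: inordK.
      case/andP: Hs => /eqP Hsz /forallP H.
      case/(nthP 0): ks => i Hi <-.
      rewrite Hsz in Hi. have := H (Ordinal Hi). case/andP => _ h; rewrite ltnS; exact: leq_trans h Hi.
    exists (Tuple sz); last by rewrite /g /= E.
    by rewrite mem_filter mem_index_enum andbT /P /= E.
  - by case=> t; rewrite mem_filter => /andP[H _] ->.
by rewrite (perm_big _ Hp) big_map big_filter_cond.
Qed.


Lemma sper_rcons s j : sper (rcons s j) = (sper s + 1 + (j - last 0 s))%N.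
Proof.
case: s => [|x s].
  by rewrite /sper /= !big_ord0; lia.
rewrite /sper size_rcons /= big_ord_recr /=.
have e1 : nth 0 (rcons s j) (size s) = j by rewrite nth_rcons ltnn eqxx.
have e2 : nth 0 (x :: rcons s j) (size s) = last x s.
  rewrite -rcons_cons nth_rcons /= ltnSn.
  by rewrite -[nth 0 (x :: s) (size s)]/(nth 0 (x :: s) (size (x :: s)).-1) nth_last.
rewrite e1 e2.
rewrite (eq_bigr (fun i : 'I_(size s) => nth 0 s i - nth 0 (x :: s) i)%N); first lia.
move=> i _. rewrite -rcons_cons !nth_rcons /= ltn_ord.
by have -> : (i < (size s).+1)%N by apply: ltnW; rewrite ltnS ltn_ord.
Qed.

Variables p q : R.
Definition w (s : seq nat) : R := p ^+ area s * q ^+ sper s.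
Definition A n (y : R) := \sum_(s <- invs n) w s * y ^+ last 0%N s.

Lemma a_nE n y : (0 < n)%N -> a_n n y p q = A n y.
Proof.
move=> n0.
rewrite /a_n /a_ni.
under eq_bigr => i _ do
  rewrite (sum_tuples n (fun s => last 0%N s == i) (fun s => p ^+ area s * q ^+ sper s)) big_distrl /= big_mkcond.
rewrite exchange_big /A [LHS]big_seq [RHS]big_seq. apply: eq_bigr => s Hs.
have /andP[H1 H2] := @last_invs n s Hs. rewrite n0 /= in H2.
rewrite (bigD1_seq (last 0%N s)) /= ?iota_uniq ?mem_iota //; last by lia.
rewrite eqxx big1 ?addr0 // => i /negbTE.
by rewrite eq_sym => ->.
Qed.

Lemma A_rec n y : A n.+1 y =
  \sum_(s <- invs n) w s * \sum_(j <- iota 1 n.+1) (y * p) ^+ j * q ^+ (1 + (j - last 0%N s)).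
Proof.
rewrite /A.
change (\sum_(s <- [seq rcons s j | s <- invs n, j <- iota 1 n.+1]) w s * y ^+ last 0%N s =
  \sum_(s <- invs n) w s * \sum_(j <- iota 1 n.+1) (y * p) ^+ j * q ^+ (1 + (j - last 0%N s))).
rewrite big_allpairs_dep. apply: eq_bigr => s _. rewrite big_distrr. apply: eq_bigr => j _.
rewrite /w /area sumn_rcons sper_rcons last_rcons /=. move: (sper s) (sumn s) (last 0%N s) => a b l. rewrite !exprD exprMn. ring.
Qed.

Lemma geom0 (x c : R) m : 1 - x != 0 ->
  \sum_(1 <= j < m.+1) x ^+ j * c = x * c / (1 - x) * (1 - x ^+ m).
Proof.
move=> hx; elim: m => [|m IH].
  by rewrite big_geq // expr0 subrr mulr0.
rewrite big_nat_recr //= IH exprS. field. done.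
Qed.

Lemma geom (x r : R) i m : (i <= m)%N -> 1 - x != 0 -> 1 - x * r != 0 -> r != 0 ->
  \sum_(1 <= j < m.+1) x ^+ j * r ^+ (1 + (j - i)) =
  x * r / (1 - x) * (1 - x ^+ i) + x * r ^+ 2 / (1 - x * r) * (x ^+ i - (x * r) ^+ m * (r^-1) ^+ i).
Proof.
move=> + hx hxr hr; elim: m => [|m IH] Hi.
  have -> : i = 0%N by lia.
  by rewrite big_geq // !expr0 mulr1 !subrr !mulr0 addr0.
have hri : forall k, r ^+ k != 0 by move=> k; rewrite expf_neq0.
case: (ltnP m i) => Him.
  have Ei : i = m.+1 by lia. subst i.
  rewrite (eq_big_nat _ _ (F2 := fun j => x ^+ j * r)); last first.
    move=> j /andP[_ hj]. have -> : (j - m.+1 = 0)%N by lia. by rewrite addn0 expr1.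
  rewrite geom0 // exprVn exprMn. field. by rewrite hx hxr hri.
rewrite big_nat_recr //= IH //.
move: Him; set d := (m - i)%N => Him. have Em : m = (d + i)%N by rewrite /d subnK.
rewrite Em. have -> : ((d + i).+1 - i = d.+1)%N by lia.
rewrite exprVn !exprMn !exprS !exprD expr0. field. by rewrite hx hxr hri.
Qed.

End S.
Arguments A {R}.
Arguments w {R}.

Theorem theorem2p2 (R : fieldType) (char0 : [pchar R] =i pred0)
  (y p q : R) (hq : q != 0) (h1 : 1 - y * p != 0) (h2 : 1 - y * p * q != 0) :
  fps_deriv (egf y p q) =
  fps_add (fps_const (y * p * q ^+ 2))
    (fps_add
      (fps_scal (y * p * q / (1 - y * p))
         (fps_sub (egf 1 p q) (egf (y * p) p q)))
      (fps_scal (y * p * q ^+ 2 / (1 - y * p * q))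
         (fps_sub (egf (y * p) p q)
            (fps_scal (y * p * q) (fps_scalex (y * p * q) (egf q^-1 p q)))))).
Proof.
have hc := (pcharf0P R).1 char0.
have hn : forall k, (k.+1)%:R != 0 :> R by move=> k; rewrite hc.
have hf : forall k, (k`!)%:R != 0 :> R by move=> k; rewrite hc -lt0n fact_gt0.
apply: functional_extensionality => n.
rewrite /fps_deriv /egf /fps_add /fps_const /fps_scal /fps_sub /fps_scalex.
case: n => [|n].
  rewrite a_nE // A_rec /A /= !big_cons !big_nil /w /sper /= big_ord0.
  have -> : (1 + (1 - 0) = 2)%N by [].
  have -> : (0 + 0 + 0 = 0)%N by [].
  rewrite (_ : 1`! = 1)%N // divr1 mulr1. ring.
have key : A p q n.+2 y = y * p * q / (1 - y * p) * (A p q n.+1 1 - A p q n.+1 (y * p))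
   + y * p * q ^+ 2 / (1 - y * p * q) * (A p q n.+1 (y * p) - (y * p * q) ^+ n.+2 * A p q n.+1 q^-1).
  rewrite A_rec /A !mulr_sumr -!sumrB !mulr_sumr -big_split /= big_seq [RHS]big_seq.
  apply: eq_bigr => s Hs.
  have /andP[H1 _] := @last_invs n.+1 s Hs.
  rewrite -[[:: 1%N, 2%N & iota 3 n]]/(index_iota 1 n.+3) geom //; last exact: leqW H1.
  rewrite expr1n. ring.
rewrite /= !a_nE // key factS natrM [(y * p * q) ^+ n.+2]exprS.
have := hf n.+1; have := hn n.+1.
move: (A p q n.+1 1) (A p q n.+1 (y * p)) (A p q n.+1 q^-1) ((n.+1)`!%:R) (n.+2%:R) ((y * p * q) ^+ n.+1) => a b c F N P hN hF.
field. by rewrite hN hF h1 h2.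
Qed.
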